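(* Let $(\Xi,\mathcal{F},P)$ be a probability space with a filtration of sub-$\sigma$-algebras $\mathcal{F}_1\subset\mathcal{F}_2\subset\cdots\subset\mathcal{F}$, where $\mathcal{F}_1=\{\emptyset,\Xi\}$. Let $\mathcal{Z}_t$ denote the space of (almost surely bounded) $\mathcal{F}_t$-measurable functions $\Xi\to\mathbb{R}$, and $\mathcal{Z}_{t,\infty}:=\mathcal{Z}_t\times\mathcal{Z}_{t+1}\times\cdots$. For each $t\ge 2$ let $\rho_t:\mathcal{Z}_t\to\mathcal{Z}_{t-1}$ be a coherent one-step conditional risk measure, and for $t\ge 3$ define $\tilde\rho_t:=\mathbb{E}[\,\cdot\,|\mathcal{F}_{t-2}]\circ\rho_t:\mathcal{Z}_t\to\mathcal{Z}_{t-2}$. Fix $0<\gamma<1$. For almost surely bounded sequences $Z_{[k,\infty]}\in\mathcal{Z}_{k,\infty}$ define the dynamic risk measure $\{\mathbb{F}_{k,\infty}\}_{k\ge1}$ by $$\mathbb{F}_{1,\infty}(Z_{[1,\infty]})=Z_1+\rho_2\Big(\gamma Z_2+\tilde\rho_3\Big(\gamma^2 Z_3+\tilde\rho_4\Big(\gamma^3 Z_4+\cdots\Big)\Big)\Big),$$ and for $k\ge 2$ $$\mathbb{F}_{k,\infty}(Z_{[k,\infty]})=\gamma^{k-1}Z_k+\tilde\rho_{k+1}\Big(\gamma^{k}Z_{k+1}+\tilde\rho_{k+2}\Big(\gamma^{k+1}Z_{k+2}+\cdots\Big)\Big),$$ where each infinitely nested expression is understood as the limit as $T\to\infty$ of the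 corresponding expression truncated after the term $\gamma^{T-1}Z_T$ (this limit exists for almost surely bounded sequences). Then $\{\mathbb{F}_{k,\infty}\}_{k\ge1}$ is time consistent: for all $1\le l<k$ and all almost surely bounded $Z_{[l,\infty]},W_{[l,\infty]}\in\mathcal{Z}_{l,\infty}$, if $Z_i=W_i$ for all $i=l,\ldots,k-1$ and $\mathbb{F}_{k,\infty}(Z_{[k,\infty]})\ge\mathbb{F}_{k,\infty}(W_{[k,\infty]})$, then $\mathbb{F}_{l,\infty}(Z_{[l,\infty]})\ge\mathbb{F}_{l,\infty}(W_{[l,\infty]})$.
   Context: A coherent one-step conditional risk measure is a mapping $\rho:\mathcal{Z}_{k+1}\to\mathcal{Z}_k$ satisfying: (1) monotonicity: $Z_1\ge Z_2$ implies $\rho(Z_1)\ge\rho(Z_2)$; (2) convexity: $\rho(cZ_1+(1-c)Z_2)\le c\rho(Z_1)+(1-c)\rho(Z_2)$ for $c\in[0,1]$; (3) translation invariance: $\rho(Z+W)=\rho(Z)+W$ for $W\in\mathcal{Z}_k$, $Z\in\mathcal{Z}_{k+1}$; (4) positive homogeneity: $\rho(cZ)=c\rho(Z)$ for $c\ge0$. All inequalities between random variables are almost sure. A sequence $Z_{[1,\infty]}$ is almost surely bounded if $\sup_t \operatorname{ess\,sup}|Z_t|<\infty$. In the paper, $Z_t$ are immediate rewards $r_t$ of an MDP and $\mathcal{F}_t$ is generated by the state history $s_{[1,t]}$; a typical choice is $\rho_t(r_t)=(1-\lambda_t)\mathbb{E}[r_t|\mathcal{F}_{t-1}]+\lambda_t\,\mathrm{CVaR}_{\alpha_t}[r_t|\mathcal{F}_{t-1}]$.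 *)

(* Defs.v *)
From HB Require Import structures.
From mathcomp Require Import all_boot all_order all_algebra.
From mathcomp Require Import all_classical all_reals all_analysis.
Set Implicit Arguments. Unset Strict Implicit. Unset Printing Implicit Defensive.
Import Order.TTheory GRing.Theory Num.Theory.
Import numFieldNormedType.Exports.
Local Open Scope classical_set_scope.
Local Open Scope ring_scope.

Section Defs.
Context (d : measure_display) (T : measurableType d) (R : realType)
        (P : probability T R).

Definition as_ (Q : T -> Prop) : Prop := {ae P, forall x, Q x}.

Definition Fmeas (G : set (set T)) (f : T -> R) : Prop :=
  forall B : set R, measurable B -> G (f @^-1` B).

(* a filtration F_1 ⊆ F_2 ⊆ ... ⊆ (measurable sets), with F_1 trivial;
   the index 0 is unused *)
Definition filtration (F : nat -> set (set T)) : Prop :=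
  [/\ forall t, (1 <= t)%N -> sigma_algebra setT (F t),
      forall t, (1 <= t)%N -> F t `<=` measurable,
      forall t, (1 <= t)%N -> F t `<=` F t.+1 &
      F 1%N = [set A | A = set0 \/ A = setT] ].

Definition Zsp (F : nat -> set (set T)) (t : nat) (X : T -> R) : Prop :=
  Fmeas (F t) X /\ exists M : R, as_ (fun x => `|X x| <= M).

Definition is_cond_exp (G : set (set T)) (X Y : T -> R) : Prop :=
  [/\ Fmeas G Y, P.-integrable setT (EFin \o Y) &
      forall A, G A ->
        (\int[P]_(x in A) (Y x)%:E = \int[P]_(x in A) (X x)%:E)%E ].

Definition cond_exp_op (F : nat -> set (set T))
    (cexp : nat -> (T -> R) -> (T -> R)) : Prop :=
  forall t (X : T -> R), (1 <= t)%N -> measurable_fun setT X ->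
    (exists M : R, as_ (fun x => `|X x| <= M)) ->
    is_cond_exp (F t) X (cexp t X).

Definition coherent_one_step (F : nat -> set (set T)) (t : nat)
    (rho : (T -> R) -> (T -> R)) : Prop :=
  [/\ forall X, Zsp F t X -> Zsp F t.-1 (rho X),
      forall X1 X2, Zsp F t X1 -> Zsp F t X2 ->
        as_ (fun x => X2 x <= X1 x) -> as_ (fun x => rho X2 x <= rho X1 x),
      forall X1 X2 (c : R), Zsp F t X1 -> Zsp F t X2 -> 0 <= c <= 1 ->
        as_ (fun x => rho (fun y => c * X1 y + (1 - c) * X2 y) x
                      <= c * rho X1 x + (1 - c) * rho X2 x),
      forall X W, Zsp F t X -> Zsp F t.-1 W ->
        as_ (fun x => rho (fun y => X y + W y) x = rho X x + W x) &
      forall X (c : R), Zsp F t X -> 0 <= c ->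
        as_ (fun x => rho (fun y => c * X y) x = c * rho X x) ].

Definition as_bounded_seq (F : nat -> set (set T)) (k : nat)
    (Z : nat -> T -> R) : Prop :=
  (forall t, (k <= t)%N -> Zsp F t (Z t)) /\
  exists M : R, forall t, (k <= t)%N -> as_ (fun x => `|Z t x| <= M).

(* nest k n Z = gamma^(k-1) Z_k + rho~_(k+1)( gamma^k Z_(k+1) + ...
   + rho~_(k+n)( gamma^(k+n-1) Z_(k+n) ) ... ),
   where rho~_t = E[ . | F_(t-2)] o rho_t *)
Fixpoint nest (rho : nat -> (T -> R) -> (T -> R))
    (cexp : nat -> (T -> R) -> (T -> R)) (gamma : R) (Z : nat -> T -> R)
    (k n : nat) {struct n} : T -> R :=
  fun x => gamma ^+ k.-1 * Z k x +
    match n with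
    | 0%N => 0
    | n'.+1 => cexp k.-1 (rho k.+1 (nest rho cexp gamma Z k.+1 n')) x
    end.

(* truncation of F_(k,oo) after the term gamma^(k+n-1) Z_(k+n) *)
Definition trunc (rho : nat -> (T -> R) -> (T -> R))
    (cexp : nat -> (T -> R) -> (T -> R)) (gamma : R) (Z : nat -> T -> R)
    (k n : nat) : T -> R :=
  if k == 1%N then
    fun x => Z 1%N x +
      match n with
      | 0%N => 0
      | n'.+1 => rho 2%N (nest rho cexp gamma Z 2 n') x
      end
  else nest rho cexp gamma Z k n.

Definition Finf (rho : nat -> (T -> R) -> (T -> R))
    (cexp : nat -> (T -> R) -> (T -> R)) (gamma : R) (k : nat)
    (Z : nat -> T -> R) : T -> R :=
  fun x => limn (fun n => trunc rho cexp gamma Z k n x).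

End Defs.

(* Main.v *)
Require Import Defs.
From HB Require Import structures.
From mathcomp Require Import all_boot all_order all_algebra.
From mathcomp Require Import all_classical all_reals all_analysis.
From mathcomp Require Import measurable_realfun zify ring lra.
Import Order.TTheory GRing.Theory Num.Theory.
Import numFieldNormedType.Exports.
Local Open Scope classical_set_scope.
Local Open Scope ring_scope.

Lemma cauchy_geo (R : realType) (u : nat -> R) (C q : R) : 0 <= q < 1 ->
  (forall n, `|u n.+1 - u n| <= C * q ^+ n) ->
  forall n, `|u n - limn u| <= C / (1 - q) * q ^+ n.
Proof.
move=> /andP[q0 q1] hu.
have q1' : 0 < 1 - q by rewrite subr_gt0.
have C0 : 0 <= C.
  by have := hu 0%N; rewrite expr0 mulr1; apply: le_trans.
set D := C / (1 - q).
have D0 : 0 <= D by rewrite /D divr_ge0// ltW.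
pose g n := D * q ^+ n.
have g0 n : 0 <= g n by rewrite /g mulr_ge0// exprn_ge0.
have gcvg : g n @[n --> \oo] --> 0.
  by have := @cvg_geometric R D q; rewrite ger0_norm//; apply.
have gg n : g n - g n.+1 = C * q ^+ n.
  rewrite /g /D exprS; field; exact: lt0r_neq0.
pose v n := u n - g n; pose w n := u n + g n.
have hv : {homo v : n m / (n <= m)%N >-> n <= m}.
  apply/nondecreasing_seqP => n; rewrite /v.
  have /ler_normlP[h1 h2] := hu n; have := gg n; lra.
have hw : {homo w : n m / (n <= m)%N >-> m <= n}.
  apply/nonincreasing_seqP => n; rewrite /w.
  have /ler_normlP[h1 h2] := hu n; have := gg n; lra.
have ub : has_ubound (range v).
  exists (w 0%N) => _ [n _ <-].
  apply: (@le_trans _ _ (w n)); first by rewrite /v /w; have := g0 n; lra.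
  exact: hw.
have lb : has_lbound (range w).
  exists (v 0%N) => _ [n _ <-].
  apply: (@le_trans _ _ (v n)); last by rewrite /v /w; have := g0 n; lra.
  exact: hv.
have cv : cvgn v := cvgP _ (nondecreasing_cvgn hv ub).
have cw : cvgn w := cvgP _ (nonincreasing_cvgn hw lb).
have cg : cvgn g := cvgP _ gcvg.
have ue : u = v \+ g by apply/funext => n; rewrite /v /= subrK.
have we : w = u \+ g by [].
have cu : cvgn u by rewrite ue; exact: is_cvgD.
have lu : limn u = limn v.
  by rewrite ue limD// (cvg_lim _ gcvg)// addr0.
have lw : limn w = limn u.
  by rewrite we limD// (cvg_lim _ gcvg)// addr0.
move=> n.
have a1 := nondecreasing_cvgn_le hv cv n.
have a2 := nonincreasing_cvgn_ge hw cw n.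
rewrite -lu in a1; rewrite lw in a2.
move: a1 a2; rewrite /v /w -/(g n) => a1 a2.
apply/ler_normlP; split; lra.
Qed.

Lemma geo_small (R : realType) (a K q : R) : 0 <= q < 1 ->
  (forall n, a <= K * q ^+ n) -> a <= 0.
Proof.
move=> /andP[q0 q1] ha.
have h : geometric K q n @[n --> \oo] --> 0.
  by apply: cvg_geometric; rewrite ger0_norm.
rewrite -(cvg_lim _ h)//; apply: limr_ge; first exact: cvgP h.
by apply: nearW => n; exact: ha.
Qed.
Section S.
Context (d : measure_display) (T : measurableType d) (R : realType).

Lemma FmeasP (G : set (set T)) (f : T -> R) : sigma_algebra setT G ->
  Fmeas G f <-> @measurable_fun _ _ (g_sigma_algebraType G) R setT f.
Proof.
move=> sG; split.
- move=> fG _ B mB; rewrite setTI; change (<<s G >> (f @^-1` B)); by rewrite sigma_algebra_id// ; exact: fG.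
- move=> mf B mB; have := mf measurableT B mB; rewrite setTI; change (<<s G >> (f @^-1` B) -> G (f @^-1` B)); by rewrite sigma_algebra_id.
Qed.

Lemma FmeasD (G : set (set T)) (f g : T -> R) : sigma_algebra setT G ->
  Fmeas G f -> Fmeas G g -> Fmeas G (fun x => f x + g x).
Proof.
move=> sG /(FmeasP _ _ sG) mf /(FmeasP _ _ sG) mg; apply/(FmeasP _ _ sG).
exact: measurable_funD.
Qed.

Lemma Fmeas_cst (G : set (set T)) (c : R) : sigma_algebra setT G -> Fmeas G (fun _ => c).
Proof.
move=> sG; apply/(FmeasP _ _ sG); exact: measurable_cst.
Qed.

Lemma FmeasM (G : set (set T)) (f : T -> R) (c : R) : sigma_algebra setT G ->
  Fmeas G f -> Fmeas G (fun x => c * f x).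
Proof.
move=> sG /(FmeasP _ _ sG) mf; apply/(FmeasP _ _ sG).
exact: (measurable_funM (measurable_cst c) mf).
Qed.

Lemma FmeasN (G : set (set T)) (f : T -> R) : sigma_algebra setT G ->
  Fmeas G f -> Fmeas G (fun x => - f x).
Proof.
move=> sG /(FmeasP _ _ sG) mf; apply/(FmeasP _ _ sG).
exact: measurableT_comp.
Qed.

Lemma Fmeas_sub (G G' : set (set T)) (f : T -> R) : G `<=` G' -> Fmeas G f -> Fmeas G' f.
Proof. by move=> GG' fG B mB; apply: GG'; exact: fG. Qed.

Lemma Fmeas_meas (G : set (set T)) (f : T -> R) : G `<=` measurable -> Fmeas G f ->
  measurable_fun setT f.
Proof. by move=> GM fG _ B mB; rewrite setTI; apply: GM; exact: fG. Qed.

End S.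
Arguments FmeasP {d T R}. Arguments FmeasD {d T R}. Arguments Fmeas_cst {d T R}.
Arguments FmeasM {d T R}. Arguments FmeasN {d T R}. Arguments Fmeas_sub {d T R}.
Arguments Fmeas_meas {d T R}.
Section C.
Context (d : measure_display) (T : measurableType d) (R : realType)
  (P : probability T R).

Lemma int_cst (E : set T) (c : R) : measurable E ->
  P.-integrable E (EFin \o (fun _ : T => c)).
Proof.
move=> mE; apply/integrableP; split; first exact/measurable_EFinP/measurable_cst.
rewrite (_ : (fun x => _) = cst `|c|%:E); last by apply/funext => x.
rewrite integral_cst// -ge0_fin_numE; last by rewrite mule_ge0.
rewrite fin_numM// ge0_fin_numE// (le_lt_trans (probability_le1 P mE))// ltry//.
Qed.

Lemma intBc (E : set T) (f g : T -> R) (c : R) : measurable E ->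
  P.-integrable E (EFin \o f) -> P.-integrable E (EFin \o g) ->
  (\int[P]_(x in E) (f x - (g x + c))%:E =
   \int[P]_(x in E) (f x)%:E - (\int[P]_(x in E) (g x)%:E + c%:E * P E))%E.
Proof.
move=> mE fi gi.
have gci : P.-integrable E (EFin \o (fun x => g x + c)).
  rewrite (_ : (EFin \o _) = (EFin \o g) \+ (EFin \o (fun _ => c)))%E; last by apply/funext.
  exact: (integrableD mE gi (int_cst _ c mE)).
under eq_integral do rewrite EFinB.
rewrite (integralB_EFin mE fi gci); congr (_ - _)%E.
under eq_integral do rewrite EFinD.
rewrite (integralD_EFin mE gi (int_cst _ c mE)).
congr (_ + _)%E; exact: (integral_cst P mE c%:E).
Qed.

End C.
Section L.
Context (d : measure_display) (T : measurableType d) (R : realType)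
  (P : probability T R).

Lemma small_le0 (t : R) : (forall j : nat, t < j.+1%:R^-1) -> t <= 0.
Proof.
move=> h; rewrite leNgt; apply/negP => t0.
have := h (Num.truncn t^-1).
have tp : t \in Num.pos by rewrite posrE.
have jp : (Num.truncn t^-1).+1%:R \in @Num.pos R by rewrite posrE ltr0n.
rewrite (invf_pgt tp jp) => /lt_trans; move/(_ _ (truncnS_gt _)).
by rewrite ltxx.
Qed.

Lemma versions_le (G : set (set T)) (Y1 Y2 X1 X2 : T -> R) (c : R) :
  sigma_algebra setT G -> G `<=` measurable ->
  Fmeas G Y1 -> Fmeas G Y2 ->
  P.-integrable setT (EFin \o Y1) -> P.-integrable setT (EFin \o Y2) ->
  measurable_fun setT X1 -> measurable_fun setT X2 ->
  P.-integrable setT (EFin \o X1) -> P.-integrable setT (EFin \o X2) ->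
  (forall A, G A -> (\int[P]_(x in A) (Y1 x)%:E = \int[P]_(x in A) (X1 x)%:E)%E) ->
  (forall A, G A -> (\int[P]_(x in A) (Y2 x)%:E = \int[P]_(x in A) (X2 x)%:E)%E) ->
  as_ P (fun x => X1 x <= X2 x + c) -> as_ P (fun x => Y1 x <= Y2 x + c).
Proof.
move=> sG GM hY1 hY2 iY1 iY2 mX1 mX2 iX1 iX2 eY1 eY2 H.
have key j : as_ P (fun x => Y1 x - (Y2 x + c) < j.+1%:R^-1).
  pose a : R := j.+1%:R^-1.
  have a0 : 0 < a by rewrite /a invr_gt0 ltr0n.
  pose E := [set x | a <= Y1 x - (Y2 x + c)].
  have GE : G E.
    have hm : Fmeas G (fun x => Y1 x + - (Y2 x + c)).
      apply: (FmeasD _ Y1 (fun x => - (Y2 x + c)) sG hY1); apply: (FmeasN _ (fun x => Y2 x + c) sG); apply: (FmeasD _ Y2 (fun _ => c) sG hY2).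
      exact: (Fmeas_cst _ _ sG).
    have := hm `[a, +oo[%classic (measurable_itv _).
    congr G; apply/seteqP; split => x /=; rewrite in_itv /= andbT //.
  have mE := GM _ GE.
  have iE (h : T -> R) : P.-integrable setT (EFin \o h) -> P.-integrable E (EFin \o h).
    by move=> hi; apply: integrableS hi.
  have mXc : measurable_fun setT (fun x => X1 x - (X2 x + c)).
    by apply: measurable_funB => //; apply: measurable_funD.
  pose k x := - Num.max (- (X1 x - (X2 x + c))) 0.
  have Hup : (\int[P]_(x in E) (X1 x - (X2 x + c))%:E <= 0)%E.
    rewrite (ae_eq_integral (fun x => (k x)%:E)) //.
    - under eq_integral do rewrite /k EFinN.
      rewrite integral_ge0N; last by move=> x _; rewrite lee_fin le_max lexx orbT.
      by rewrite oppe_le0 integral_ge0// => x _; rewrite lee_fin le_max lexx orbT.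
    - apply/measurable_EFinP; exact: measurable_funS mXc.
    - apply/measurable_EFinP; apply: measurable_funS (measurableT) (subsetT _) _.
      by apply: measurableT_comp => //; apply: measurable_maxr => //; apply: measurableT_comp.
    - move: H; rewrite /as_; apply: filterS => x hx _.
      rewrite /k max_l ?opprK// oppr_ge0 subr_le0 //.
  have Heq : (\int[P]_(x in E) (Y1 x - (Y2 x + c))%:E =
              \int[P]_(x in E) (X1 x - (X2 x + c))%:E)%E.
    by rewrite !intBc ?iE// eY1// eY2.
  have Hlow : (a%:E * P E <= \int[P]_(x in E) (Y1 x - (Y2 x + c))%:E)%E.
    rewrite -(integral_cst P mE a%:E).
    apply: ge0_le_integral => //.
    - by move=> x _; rewrite lee_fin ltW.
    - apply/measurable_EFinP; apply: measurable_funS (measurableT) (subsetT _) _.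
      apply: measurable_funB; first exact: (Fmeas_meas _ _ GM hY1).
      apply: measurable_funD; first exact: (Fmeas_meas _ _ GM hY2).
      exact: measurable_cst.
  have PE0 : P E = 0%E.
    apply/eqP; rewrite -measure_le0.
    rewrite Heq in Hlow; have := le_trans Hlow Hup.
    by rewrite pmule_rle0 ?lte_fin.
  by exists E; split => // x /= /negP; rewrite -leNgt.
have := ae_foralln key; apply: filterS => x hx.
by rewrite -subr_le0; apply: small_le0.
Qed.

End L.
Lemma int_bdd d (T : measurableType d) (R : realType) (P : probability T R)
  (X : T -> R) (M : R) : measurable_fun setT X ->
  as_ P (fun x => `|X x| <= M) -> P.-integrable setT (EFin \o X).
Proof.
move=> mX hX; apply/integrableP; split; first exact/measurable_EFinP.
apply: (le_lt_trans (integral_le_bound (`|M|)%:E _ _ _ _)) => //.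
- by apply/measurable_EFinP; apply: measurableT_comp.
- move: hX; rewrite /as_; apply: filterS => x hx _ /=.
  by rewrite /= lee_fin (le_trans hx)// ler_norm.
- by apply: lte_mul_pinfty => //; apply: (le_lt_trans (probability_le1 P measurableT)); rewrite ltry.
Qed.

Section Main.
Context (d : measure_display) (T : measurableType d) (R : realType)
    (P : probability T R) (F : nat -> set (set T))
    (rho : nat -> (T -> R) -> (T -> R))
    (cexp : nat -> (T -> R) -> (T -> R)) (gamma : R).
Context (hF : filtration F)
  (hrho : forall t, (2 <= t)%N -> coherent_one_step P F t (rho t))
  (hce : cond_exp_op P F cexp) (hg : 0 < gamma < 1).

Lemma sigF t : (1 <= t)%N -> sigma_algebra setT (F t).
Proof. by case: hF => + _ _ _; apply. Qed.

Lemma FM t : (1 <= t)%N -> F t `<=` measurable.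
Proof. by case: hF => _ + _ _; apply. Qed.

Lemma F_mono s t : (1 <= s)%N -> (s <= t)%N -> F s `<=` F t.
Proof.
move=> s1; elim: t => [|t IH]; first by rewrite leqn0 => /eqP s0; rewrite s0 in s1.
rewrite leq_eqVlt => /orP[/eqP -> //|]; rewrite ltnS => st.
apply: subset_trans (IH st) _; case: hF => _ _ + _; apply.
exact: leq_trans st.
Qed.

Lemma Zsp_meas t (X : T -> R) : (1 <= t)%N -> Zsp P F t X -> measurable_fun setT X.
Proof. by move=> t1 [hX _]; exact: (Fmeas_meas _ _ (FM _ t1) hX). Qed.

Lemma Zsp_cst t (c : R) : (1 <= t)%N -> Zsp P F t (fun _ => c).
Proof.
move=> t1; split; first exact: (Fmeas_cst _ c (sigF _ t1)).
by exists `|c|; apply: aeW => x.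
Qed.

Lemma Zsp_lin t (a : R) (X Y : T -> R) : (1 <= t)%N -> Zsp P F t X -> Zsp P F t Y ->
  Zsp P F t (fun x => a * X x + Y x).
Proof.
move=> t1 [hX [MX bX]] [hY [MY bY]]; split.
  apply: (FmeasD _ (fun x => a * X x) Y (sigF _ t1)) => //.
  exact: (FmeasM _ X a (sigF _ t1)).
exists (`|a| * MX + MY); move: bX bY; rewrite /as_; apply: filterS2 => x hx hy.
rewrite (le_trans (ler_normD _ _))// lerD// normrM ler_wpM2l//.
Qed.

Lemma Zsp_mono s t (X : T -> R) : (1 <= s)%N -> (s <= t)%N -> Zsp P F s X -> Zsp P F t X.
Proof.
move=> s1 st [hX bX]; split => //; exact: (Fmeas_sub _ _ _ (F_mono _ _ s1 st) hX).
Qed.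

Lemma cexp_Zsp t (X : T -> R) : (1 <= t)%N -> measurable_fun setT X ->
  (exists M, as_ P (fun x => `|X x| <= M)) -> Fmeas (F t) (cexp t X).
Proof. by move=> t1 mX bX; case: (hce _ _ t1 mX bX). Qed.

Lemma cexp_le t (X1 X2 : T -> R) (c : R) : (1 <= t)%N ->
  measurable_fun setT X1 -> measurable_fun setT X2 ->
  (exists M, as_ P (fun x => `|X1 x| <= M)) ->
  (exists M, as_ P (fun x => `|X2 x| <= M)) ->
  as_ P (fun x => X1 x <= X2 x + c) ->
  as_ P (fun x => cexp t X1 x <= cexp t X2 x + c).
Proof.
move=> t1 m1 m2 b1 b2 H.
have [f1 i1 e1] := hce _ _ t1 m1 b1.
have [f2 i2 e2] := hce _ _ t1 m2 b2.
have [M1 h1] := b1; have [M2 h2] := b2.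
apply: (@versions_le _ _ _ P (F t) _ _ X1 X2 c) => //.
- exact: sigF.
- exact: FM.
- exact: int_bdd h1.
- exact: int_bdd h2.
Qed.

Lemma cexp_bound t (X : T -> R) (M : R) : (1 <= t)%N -> measurable_fun setT X ->
  as_ P (fun x => `|X x| <= M) -> as_ P (fun x => `|cexp t X x| <= M).
Proof.
move=> t1 mX hX.
have bX : exists M, as_ P (fun x => `|X x| <= M) by exists M.
have [f1 i1 e1] := hce _ _ t1 mX bX.
have up : as_ P (fun x => cexp t X x <= M + 0).
  apply: (@versions_le _ _ _ P (F t) _ _ X (fun _ => M) 0) => //.
  - exact: sigF.
  - exact: FM.
  - exact: (Fmeas_cst _ M (sigF _ t1)).
  - exact: int_cst.
  - exact: int_bdd hX.
  - exact: int_cst.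
  - by move: hX; rewrite /as_; apply: filterS => x; rewrite addr0 => /ler_normlP[].
have lo : as_ P (fun x => - M <= cexp t X x + 0).
  apply: (@versions_le _ _ _ P (F t) _ _ (fun _ => - M) X 0) => //.
  - exact: sigF.
  - exact: FM.
  - exact: (Fmeas_cst _ (- M) (sigF _ t1)).
  - exact: int_cst.
  - exact: int_cst.
  - exact: int_bdd hX.
  - by move: hX; rewrite /as_; apply: filterS => x; rewrite addr0 => /ler_normlP[+ _]; rewrite lerNl.
move: up lo; rewrite /as_; apply: filterS2 => x; rewrite !addr0 => u l.
by apply/ler_normlP; split => //; rewrite lerNl.
Qed.


Lemma asS (Q1 Q2 : T -> Prop) : (forall x, Q1 x -> Q2 x) -> as_ P Q1 -> as_ P Q2.
Proof. by move=> h; rewrite /as_; apply: filterS. Qed.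
Lemma asS2 (Q1 Q2 Q3 : T -> Prop) : (forall x, Q1 x -> Q2 x -> Q3 x) ->
  as_ P Q1 -> as_ P Q2 -> as_ P Q3.
Proof. by move=> h; rewrite /as_; apply: filterS2. Qed.
Lemma asS3 (Q1 Q2 Q3 Q4 : T -> Prop) : (forall x, Q1 x -> Q2 x -> Q3 x -> Q4 x) ->
  as_ P Q1 -> as_ P Q2 -> as_ P Q3 -> as_ P Q4.
Proof. by move=> h; rewrite /as_; apply: filterS3. Qed.
Lemma asT (Q : T -> Prop) : (forall x, Q x) -> as_ P Q.
Proof. by move=> h; apply: aeW. Qed.

Lemma pred_ge1 (t : nat) : (2 <= t)%N -> (1 <= t.-1)%N.
Proof. by case: t => [|[|t]]. Qed.

Lemma dist_le (a b e : R) : a <= b + e -> b <= a + e -> `|a - b| <= e.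
Proof.
move=> h1 h2; apply/ler_normlP; split.
- by rewrite opprB lerBlDr addrC.
- by rewrite lerBlDr addrC.
Qed.

Lemma dist_ge (a b e : R) : `|a - b| <= e -> a <= b + e /\ b <= a + e.
Proof.
move=> /ler_normlP[h1 h2]; split.
- by rewrite -lerBlDl.
- by move: h1; rewrite opprB lerBlDr addrC.
Qed.

Lemma rho_Zsp t (X : T -> R) : (2 <= t)%N -> Zsp P F t X -> Zsp P F t.-1 (rho t X).
Proof. by move=> t2; case: (hrho _ t2) => + _ _ _ _; apply. Qed.

Lemma rho_le t (X Y : T -> R) (c : R) : (2 <= t)%N -> Zsp P F t X -> Zsp P F t Y ->
  as_ P (fun x => X x <= Y x + c) -> as_ P (fun x => rho t X x <= rho t Y x + c).
Proof.
move=> t2 hX hY H; case: (hrho _ t2) => _ hmono _ htr _.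
have t1 : (1 <= t)%N by exact: leq_trans t2.
have hY' : Zsp P F t (fun y => Y y + c).
  have := Zsp_lin _ 1 Y (fun _ => c) t1 hY (Zsp_cst _ c t1).
  by rewrite (_ : (fun x => 1 * Y x + c) = (fun y => Y y + c))//; apply/funext => y; rewrite mul1r.
have m := hmono (fun y => Y y + c) X hY' hX H.
have tr := htr Y (fun _ => c) hY (Zsp_cst t.-1 c (pred_ge1 _ t2)).
move: m tr; rewrite /as_; apply: filterS2 => x m tr.
by rewrite -tr.
Qed.

Lemma rho0 t : (2 <= t)%N -> as_ P (fun x => rho t (fun _ => 0) x = 0).
Proof.
move=> t2; case: (hrho _ t2) => _ _ _ _ hom.
have t1 : (1 <= t)%N by exact: leq_trans t2.
have := hom (fun _ => 0) 0 (Zsp_cst _ 0 t1) (lexx 0).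
rewrite (_ : (fun y => 0 * 0) = (fun _ => 0)); last by apply/funext => y; rewrite mul0r.
by apply: asS => x; rewrite mul0r.
Qed.

Lemma rho_bound t (X : T -> R) (e : R) : (2 <= t)%N -> Zsp P F t X ->
  as_ P (fun x => `|X x| <= e) -> as_ P (fun x => `|rho t X x| <= e).
Proof.
move=> t2 hX H.
have t1 : (1 <= t)%N by exact: leq_trans t2.
have h0 := Zsp_cst _ 0 t1.
have u : as_ P (fun x => rho t X x <= rho t (fun _ => 0) x + e).
  apply: rho_le => //; move: H; apply: asS => x hx.
  by have := dist_ge (X x) 0 e; rewrite subr0 => /(_ hx) [h _]; exact: h.
have v : as_ P (fun x => rho t (fun _ => 0) x <= rho t X x + e).
  apply: rho_le => //; move: H; apply: asS => x hx.
  by have := dist_ge (X x) 0 e; rewrite subr0 => /(_ hx) [_ h]; exact: h.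
have w := rho0 _ t2.
move: u v w; apply: asS3 => x u v w.
by rewrite -(subr0 (rho t X x)); apply: dist_le; rewrite -w.
Qed.
Lemma cr_Zsp j (V : T -> R) : (2 <= j)%N -> Zsp P F j.+1 V ->
  Zsp P F j (cexp j.-1 (rho j.+1 V)).
Proof.
move=> j2 hV.
have hr : Zsp P F j (rho j.+1 V) := rho_Zsp _ _ (leqW j2) hV.
have j1 := pred_ge1 _ j2.
have [_ [M bM]] := hr.
have mr := Zsp_meas _ _ (ltnW j2) hr.
apply: (Zsp_mono _ _ _ j1 (leq_pred j)); split.
  exact: (cexp_Zsp _ _ j1 mr (ex_intro _ M bM)).
by exists M; exact: (cexp_bound _ _ _ j1 mr bM).
Qed.

Lemma cr_le j (V1 V2 : T -> R) (c : R) : (2 <= j)%N -> Zsp P F j.+1 V1 -> Zsp P F j.+1 V2 ->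
  as_ P (fun x => V1 x <= V2 x + c) ->
  as_ P (fun x => cexp j.-1 (rho j.+1 V1) x <= cexp j.-1 (rho j.+1 V2) x + c).
Proof.
move=> j2 h1 h2 H.
have r1 : Zsp P F j (rho j.+1 V1) := rho_Zsp _ _ (leqW j2) h1.
have r2 : Zsp P F j (rho j.+1 V2) := rho_Zsp _ _ (leqW j2) h2.
have j1 := pred_ge1 _ j2.
have [_ [M1 b1]] := r1; have [_ [M2 b2]] := r2.
apply: (cexp_le _ _ _ _ j1 (Zsp_meas _ _ (ltnW j2) r1) (Zsp_meas _ _ (ltnW j2) r2)
  (ex_intro _ M1 b1) (ex_intro _ M2 b2)).
exact: (rho_le _ _ _ _ (leqW j2) h1 h2 H).
Qed.

Lemma cr_bound j (V : T -> R) (e : R) : (2 <= j)%N -> Zsp P F j.+1 V ->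
  as_ P (fun x => `|V x| <= e) ->
  as_ P (fun x => `|cexp j.-1 (rho j.+1 V) x| <= e).
Proof.
move=> j2 hV H.
have r : Zsp P F j (rho j.+1 V) := rho_Zsp _ _ (leqW j2) hV.
apply: (cexp_bound _ _ _ (pred_ge1 _ j2) (Zsp_meas _ _ (ltnW j2) r)).
exact: (rho_bound _ _ _ (leqW j2) hV H).
Qed.

Lemma cr_dist j (V1 V2 : T -> R) (e : R) : (2 <= j)%N -> Zsp P F j.+1 V1 -> Zsp P F j.+1 V2 ->
  as_ P (fun x => `|V1 x - V2 x| <= e) ->
  as_ P (fun x => `|cexp j.-1 (rho j.+1 V1) x - cexp j.-1 (rho j.+1 V2) x| <= e).
Proof.
move=> j2 h1 h2 H.
have u := cr_le _ _ _ e j2 h1 h2 (asS _ _ (fun x hx => proj1 (dist_ge _ _ _ hx)) H).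
have v := cr_le _ _ _ e j2 h2 h1 (asS _ _ (fun x hx => proj2 (dist_ge _ _ _ hx)) H).
by move: u v; apply: asS2 => x u v; apply: dist_le.
Qed.

Lemma rho_dist t (V1 V2 : T -> R) (e : R) : (2 <= t)%N -> Zsp P F t V1 -> Zsp P F t V2 ->
  as_ P (fun x => `|V1 x - V2 x| <= e) ->
  as_ P (fun x => `|rho t V1 x - rho t V2 x| <= e).
Proof.
move=> t2 h1 h2 H.
have u := rho_le _ _ _ e t2 h1 h2 (asS _ _ (fun x hx => proj1 (dist_ge _ _ _ hx)) H).
have v := rho_le _ _ _ e t2 h2 h1 (asS _ _ (fun x hx => proj2 (dist_ge _ _ _ hx)) H).
by move: u v; apply: asS2 => x u v; apply: dist_le.
Qed.

Lemma nest_Zsp l (Z : nat -> T -> R) : (forall t, (l <= t)%N -> Zsp P F t (Z t)) ->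
  forall n j, (l <= j)%N -> (2 <= j)%N -> Zsp P F j (nest rho cexp gamma Z j n).
Proof.
move=> hZ; elim=> [|n IH] j lj j2.
- exact: (Zsp_lin _ _ _ (fun _ => 0) (ltnW j2) (hZ j lj) (Zsp_cst _ 0 (ltnW j2))).
- apply: (Zsp_lin _ _ _ (cexp j.-1 (rho j.+1 (nest rho cexp gamma Z j.+1 n))) (ltnW j2) (hZ j lj)).
  by apply: cr_Zsp => //; apply: IH; apply: leqW.
Qed.

Lemma gamma_ge0 : 0 <= gamma.
Proof. by case/andP: hg => /ltW. Qed.

Lemma nest0_bound l (Z : nat -> T -> R) (B : R) :
  (forall t, (l <= t)%N -> as_ P (fun x => `|Z t x| <= B)) ->
  forall j, (l <= j)%N -> as_ P (fun x => `|nest rho cexp gamma Z j 0 x| <= B * gamma ^+ j.-1).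
Proof.
move=> hB j lj; move: (hB j lj); apply: asS => x hx /=.
rewrite addr0 normrM normrX (ger0_norm gamma_ge0) mulrC ler_wpM2r// exprn_ge0//.
exact: gamma_ge0.
Qed.

Lemma nest_diff l (Z : nat -> T -> R) (B : R) :
  (forall t, (l <= t)%N -> Zsp P F t (Z t)) ->
  (forall t, (l <= t)%N -> as_ P (fun x => `|Z t x| <= B)) ->
  forall n j, (l <= j)%N -> (2 <= j)%N ->
  as_ P (fun x => `|nest rho cexp gamma Z j n.+1 x - nest rho cexp gamma Z j n x|
                  <= B * gamma ^+ (j + n)).
Proof.
move=> hZ hB; elim=> [|n IH] j lj j2.
- have hV := nest_Zsp _ _ hZ 0 _ (leqW lj) (leqW j2).
  have bV := nest0_bound _ _ _ hB _ (leqW lj).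
  have := cr_bound _ _ _ j2 hV bV.
  apply: asS => x hx /=.
  by rewrite addn0 addr0 (addrC (gamma ^+ j.-1 * Z j x)) addrK.
- have h1 := nest_Zsp _ _ hZ n.+1 _ (leqW lj) (leqW j2).
  have h0 := nest_Zsp _ _ hZ n _ (leqW lj) (leqW j2).
  have := cr_dist _ _ _ _ j2 h1 h0 (IH _ (leqW lj) (leqW j2)).
  apply: asS => x hx /=.
  by rewrite addnS -addSn opprD addrACA subrr add0r.
Qed.

Lemma trunc_nest (Z : nat -> T -> R) j n : (2 <= j)%N ->
  trunc rho cexp gamma Z j n = nest rho cexp gamma Z j n.
Proof. by move=> j2; rewrite /trunc; case: eqP => // j1; rewrite j1 in j2. Qed.

Lemma trunc_diff l (Z : nat -> T -> R) (B : R) : (1 <= l)%N ->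
  (forall t, (l <= t)%N -> Zsp P F t (Z t)) ->
  (forall t, (l <= t)%N -> as_ P (fun x => `|Z t x| <= B)) ->
  forall n, as_ P (fun x => `|trunc rho cexp gamma Z l n.+1 x - trunc rho cexp gamma Z l n x|
                  <= B * gamma ^+ (l + n)).
Proof.
move=> l1 hZ hB n.
have [l1e|l2] := eqVneq l 1%N; last first.
  have l2' : (2 <= l)%N by rewrite ltn_neqAle eq_sym l2 l1.
  by rewrite (trunc_nest Z l n.+1 l2') (trunc_nest Z l n l2'); exact: (nest_diff _ _ _ hZ hB n l (leqnn l) l2').
subst l; rewrite /trunc /=.
case: n => [|n].
- have hV := nest_Zsp _ _ hZ 0 2 (isT : (1 <= 2)%N) (leqnn 2).
  have bV := nest0_bound _ _ _ hB 2 (isT : (1 <= 2)%N).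
  have := rho_bound _ _ _ (leqnn 2) hV bV.
  apply: asS => x hx /=.
  by rewrite addr0 (addrC (Z 1%N x)) addrK.
- have h1 := nest_Zsp _ _ hZ n.+1 2 (isT : (1 <= 2)%N) (leqnn 2).
  have h0 := nest_Zsp _ _ hZ n 2 (isT : (1 <= 2)%N) (leqnn 2).
  have := rho_dist _ _ _ _ (leqnn 2) h1 h0 (nest_diff _ _ _ hZ hB n 2 (isT : (1 <= 2)%N) (leqnn 2)).
  apply: asS => x hx /=.
  by rewrite opprD addrACA subrr add0r.
Qed.
Lemma nest_prop l k (Z W : nat -> T -> R) :
  (forall t, (l <= t)%N -> Zsp P F t (Z t)) ->
  (forall t, (l <= t)%N -> Zsp P F t (W t)) ->
  (forall i, (l <= i < k)%N -> as_ P (fun x => Z i x = W i x)) ->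
  forall m j n e, (l <= j)%N -> (2 <= j)%N -> (j + m)%N = k ->
  as_ P (fun x => nest rho cexp gamma W k n x <= nest rho cexp gamma Z k n x + e) ->
  as_ P (fun x => nest rho cexp gamma W j (n + m) x <= nest rho cexp gamma Z j (n + m) x + e).
Proof.
move=> hZ hW hZW; elim=> [|m IH] j n e lj j2 jk H.
  by rewrite addn0 in jk; subst k; rewrite addn0.
have jk' : (j.+1 + m)%N = k by rewrite addSnnS.
have IH' := IH j.+1 n e (leqW lj) (leqW j2) jk' H.
have c := cr_le _ _ _ e j2 (nest_Zsp _ _ hW (n + m) _ (leqW lj) (leqW j2))
  (nest_Zsp _ _ hZ (n + m) _ (leqW lj) (leqW j2)) IH'.
have ljk : (l <= j < k)%N by rewrite lj /= -jk addnS ltnS leq_addr.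
have eq := hZW j ljk.
rewrite addnS.
move: c eq; apply: asS2 => x c eq /=.
by rewrite eq -addrA lerD2l.
Qed.

Lemma main_sec l k (Z W : nat -> T -> R) :
    (1 <= l)%N -> (l < k)%N ->
    as_bounded_seq P F l Z -> as_bounded_seq P F l W ->
    (forall i, (l <= i < k)%N -> as_ P (fun x => Z i x = W i x)) ->
    as_ P (fun x => Finf rho cexp gamma k W x <= Finf rho cexp gamma k Z x) ->
    as_ P (fun x => Finf rho cexp gamma l W x <= Finf rho cexp gamma l Z x).
Proof.
move=> l1 lk [hZ [BZ bZ]] [hW [BW bW]] hZW H.
have k2 : (2 <= k)%N by apply: leq_trans lk.
pose B := Num.max (Num.max BZ BW) 0.
have B0 : 0 <= B by rewrite /B le_max lexx orbT.
have bZ' t : (l <= t)%N -> as_ P (fun x => `|Z t x| <= B).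
  move=> lt; move: (bZ t lt); apply: asS => x hx.
  by rewrite (le_trans hx)// /B le_max le_max lexx.
have bW' t : (l <= t)%N -> as_ P (fun x => `|W t x| <= B).
  move=> lt; move: (bW t lt); apply: asS => x hx.
  by rewrite (le_trans hx)// /B le_max le_max lexx orbT.
have g0 : 0 <= gamma by case/andP: hg => /ltW.
have g1 : gamma < 1 by case/andP: hg.
have g01 : 0 <= gamma < 1 by rewrite g0 g1.
have tail j (V : nat -> T -> R) : (l <= j)%N ->
    (forall t, (l <= t)%N -> Zsp P F t (V t)) ->
    (forall t, (l <= t)%N -> as_ P (fun x => `|V t x| <= B)) ->
    as_ P (fun x => forall n, `|trunc rho cexp gamma V j n x - Finf rho cexp gamma j V x|
                 <= B * gamma ^+ j / (1 - gamma) * gamma ^+ n).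
  move=> lj hV bV.
  have := ae_foralln (fun n => trunc_diff _ _ _ (leq_trans l1 lj)
     (fun t jt => hV t (leq_trans lj jt)) (fun t jt => bV t (leq_trans lj jt)) n).
  apply: filterS => x hx n.
  have hd m : `|trunc rho cexp gamma V j m.+1 x - trunc rho cexp gamma V j m x|
      <= B * gamma ^+ j * gamma ^+ m by rewrite -mulrA -exprD; exact: hx.
  exact: (@cauchy_geo R (fun n => trunc rho cexp gamma V j n x) _ gamma g01 hd n).
pose dk := B * gamma ^+ k / (1 - gamma).
pose dl := B * gamma ^+ l / (1 - gamma).
have tkZ := tail k Z (ltnW lk) hZ bZ'.
have tkW := tail k W (ltnW lk) hW bW'.
have tlZ := tail l Z (leqnn l) hZ bZ'.
have tlW := tail l W (leqnn l) hW bW'.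
have atk n : as_ P (fun x => nest rho cexp gamma W k n x <=
                            nest rho cexp gamma Z k n x + 2 * (dk * gamma ^+ n)).
  move: tkZ tkW H; apply: asS3 => x tZ tW h.
  have := tZ n; have := tW n; rewrite !trunc_nest// => /ler_normlP[a1 a2] /ler_normlP[b1 b2].
  rewrite -/dk in a1 a2 b1 b2; lra.
have prop n : as_ P (fun x => trunc rho cexp gamma W l (n + (k - l)) x <=
                  trunc rho cexp gamma Z l (n + (k - l)) x + 2 * (dk * gamma ^+ n)).
  have [l1e|l2] := eqVneq l 1%N; last first.
    have l2' : (2 <= l)%N by rewrite ltn_neqAle eq_sym l2 l1.
    rewrite !trunc_nest//.
    exact: (nest_prop _ _ _ _ hZ hW hZW (k - l) l n _ (leqnn l) l2' (subnKC (ltnW lk)) (atk n)).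
  subst l.
  have p2 := nest_prop _ _ _ _ hZ hW hZW (k - 2) 2 n (2 * (dk * gamma ^+ n)) (isT : (1 <= 2)%N)
    (leqnn 2) (subnKC k2) (atk n).
  have r := rho_le _ _ _ _ (leqnn 2) (nest_Zsp _ _ hW (n + (k - 2)) 2 (isT : (1 <= 2)%N) (leqnn 2))
    (nest_Zsp _ _ hZ (n + (k - 2)) 2 (isT : (1 <= 2)%N) (leqnn 2)) p2.
  have l1k : (1 <= 1 < k)%N by rewrite leqnn.
  have e1 := hZW 1%N l1k.
  have -> : (n + (k - 1) = (n + (k - 2)).+1)%N by lia.
  rewrite /trunc /=.
  move: r e1; apply: asS2 => x r e1 /=.
  by rewrite e1 -addrA lerD2l.
have pall : as_ P (fun x => forall n, trunc rho cexp gamma W l (n + (k - l)) x <=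
    trunc rho cexp gamma Z l (n + (k - l)) x + 2 * (dk * gamma ^+ n)) := ae_foralln prop.
move: tlZ tlW pall; apply: asS3 => x tZ tW pr.
rewrite -subr_le0; apply: (@geo_small R _ (2 * dk + 2 * dl) gamma g01) => n.
have := tZ (n + (k - l))%N; have := tW (n + (k - l))%N; have := pr n.
rewrite -/dl => p /ler_normlP[a1 a2] /ler_normlP[b1 b2].
have gg : dl * gamma ^+ (n + (k - l)) <= dl * gamma ^+ n.
  rewrite ler_wpM2l//; first by rewrite /dl divr_ge0 ?mulr_ge0 ?exprn_ge0// subr_ge0 ltW.
  by rewrite exprD; apply: ler_piMr; [exact: exprn_ge0 | exact: exprn_ile1 _ g0 (ltW g1)].
lra.
Qed.

End Main.

Theorem theorem1 (d : measure_display) (T : measurableType d) (R : realType)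
    (P : probability T R) (F : nat -> set (set T))
    (rho : nat -> (T -> R) -> (T -> R))
    (cexp : nat -> (T -> R) -> (T -> R)) (gamma : R) :
  filtration F ->
  (forall t, (2 <= t)%N -> coherent_one_step P F t (rho t)) ->
  cond_exp_op P F cexp ->
  0 < gamma < 1 ->
  forall (l k : nat) (Z W : nat -> T -> R),
    (1 <= l)%N -> (l < k)%N ->
    as_bounded_seq P F l Z -> as_bounded_seq P F l W ->
    (forall i, (l <= i < k)%N -> as_ P (fun x => Z i x = W i x)) ->
    as_ P (fun x => Finf rho cexp gamma k W x <= Finf rho cexp gamma k Z x) ->
    as_ P (fun x => Finf rho cexp gamma l W x <= Finf rho cexp gamma l Z x).
Proof.
move=> hF hrho hce hg l k Z W l1 lk hZ hW hZW H.
exact: (@main_sec d T R P F rho cexp gamma hF hrho hce hg l k Z W l1 lk hZ hW hZW H).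
Qed.
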